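(* Let $n\ge 2$ be an integer. Then $\gamma^{SLD}(P_n\square P_2)=n+1$ if $n$ is odd and $\gamma^{SLD}(P_n\square P_2)=n+2$ if $n$ is even.
   Context: $P_k$ denotes the path on $k$ vertices. The Cartesian product $G\square H$ has vertex set $V(G)\times V(H)$, with $(u,v)$ adjacent to $(u',v')$ iff either $u=u'$ and $vv'\in E(H)$, or $uu'\in E(G)$ and $v=v'$. For a vertex $u$, $N[u]$ is its closed neighbourhood. A code is a non-empty subset $C$ of the vertex set $V$; $I(C;u)=N[u]\cap C$. A code $C$ is self-locating-dominating if for every $u\in V\setminus C$ we have $I(C;u)\neq\emptyset$ and $\bigcap_{c\in I(C;u)}N[c]=\{u\}$; $\gamma^{SLD}$ is the minimum size of such a code. *)

(* Defs.v *)
From mathcomp Require Import all_boot.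
Set Implicit Arguments. Unset Strict Implicit. Unset Printing Implicit Defensive.

Definition closed_nbhd (T : finType) (adj : rel T) (u : T) : {set T} :=
  [set v | (v == u) || adj u v].

Definition Iset (T : finType) (adj : rel T) (C : {set T}) (u : T) : {set T} :=
  closed_nbhd adj u :&: C.

Definition is_SLD (T : finType) (adj : rel T) (C : {set T}) : bool :=
  (C != set0) &&
  [forall u, (u \notin C) ==>
     ((Iset adj C u != set0) &&
      (\bigcap_(c in Iset adj C u) closed_nbhd adj c == [set u]))].

Definition gamma_SLD_is (T : finType) (adj : rel T) (k : nat) : Prop :=
  (exists C : {set T}, is_SLD adj C /\ #|C| = k) /\
  (forall C : {set T}, is_SLD adj C -> k <= #|C|).

Definition path_adj (k : nat) : rel 'I_k :=
  fun i j => (i.+1 == j :> nat) || (j.+1 == i :> nat).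

Definition cart_adj (A B : finType) (eA : rel A) (eB : rel B) : rel (A * B) :=
  fun x y => ((x.1 == y.1) && eB x.2 y.2) || (eA x.1 y.1 && (x.2 == y.2)).

(* Main.v *)
Require Import Defs.
From mathcomp Require Import all_boot.
From mathcomp Require Import zify.

Section Aux.
Variable m : nat.
Local Notation n := m.+2.
Local Notation T := ('I_n * 'I_2)%type.
Local Notation adj := (cart_adj (@path_adj n) (@path_adj 2)).

Lemma nbE (x y : T) : (y \in closed_nbhd adj x) =
  [|| ((y.1:nat) == x.1) && ((y.2:nat) == x.2),
      ((x.1:nat) == y.1) && ((x.2.+1 == y.2) || (y.2.+1 == x.2)) |
      ((x.1.+1 == y.1) || (y.1.+1 == x.1)) && ((x.2:nat) == y.2)].
Proof.
case: x => [a b]; case: y => [c d].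
by rewrite inE /cart_adj /path_adj /= xpair_eqE.
Qed.

Lemma pairE (x y : T) : (x == y) = ((x.1 : nat) == y.1) && ((x.2:nat) == y.2).
Proof. by case: x => [a b]; case: y => [c d]; rewrite xpair_eqE. Qed.

Lemma sld_ok (C : {set T}) (u : T) : u \notin C -> 0 < u.1 -> u.1.+1 < n ->
  (inord (u.1 - 1), u.2) \in C -> (inord u.1.+1, u.2) \in C ->
  (Iset adj C u != set0) &&
  (\bigcap_(c in Iset adj C u) closed_nbhd adj c == [set u]).
Proof.
move=> uC h0 h1 aC bC.
have u1 := ltn_ord u.1; have u2 := ltn_ord u.2.
have aI : (inord (u.1 - 1), u.2) \in Iset adj C u.
  by rewrite /Iset in_setI aC andbT nbE /= inordK; lia.
have bI : (inord u.1.+1, u.2) \in Iset adj C u.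
  by rewrite /Iset in_setI bC andbT nbE /= inordK; lia.
apply/andP; split; first by apply/set0Pn; exists (inord (u.1 - 1), u.2).
apply/eqP/setP => v; rewrite inE; apply/idP/idP.
- move=> /bigcapP H; have := H _ aI; have := H _ bI.
  have v1 := ltn_ord v.1; have v2 := ltn_ord v.2.
  rewrite !nbE /= !inordK ?pairE; lia.
- move/eqP->; apply/bigcapP => c; rewrite /Iset in_setI => /andP[cu _].
  by move: cu; rewrite !nbE; lia.
Qed.

Lemma sld_nec (C : {set T}) (u : T) : is_SLD adj C -> u \notin C ->
  [/\ 0 < u.1, u.1.+1 < n, (inord (u.1 - 1), u.2) \in C & (inord u.1.+1, u.2) \in C].
Proof.
move=> /andP[_ /forallP /(_ u)]; rewrite [u \notin C]/= => H uC.
move: H; rewrite uC /= => /andP[_ /eqP Hcap].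
have W : forall w : T, w != u ->
    (forall c : T, c \in C -> c \in closed_nbhd adj u -> w \in closed_nbhd adj c) -> False.
  move=> w wu Hw; have : w \in [set u].
    rewrite -Hcap; apply/bigcapP => c; rewrite /Iset in_setI => /andP[cu cC].
    exact: Hw.
  by rewrite inE (negbTE wu).
have u1 := ltn_ord u.1; have u2 := ltn_ord u.2.
have cneq : forall c : T, c \in C -> ~~ ((c.1 : nat) == u.1) || ~~ ((c.2:nat) == u.2).
  move=> c cC; rewrite -negb_and -pairE; apply: contraNneq uC => <-; exact: cC.
have hA : (0 < u.1) && ((inord (u.1 - 1), u.2) \in C).
  case hA: (_ && _) => //; exfalso.
  have ca : forall c : T, c \in C -> ~~ ((c.1.+1 == u.1) && ((c.2:nat) == u.2)).
    move=> c cC; apply/negP => H.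
    have ce : c = (inord (u.1 - 1), u.2).
      by apply/eqP; rewrite pairE /= inordK; lia.
    by move: hA; rewrite -ce cC andbT; lia.
  case: (ltnP u.1.+1 n) => hlt.
  - apply: (W (inord u.1.+1, inord (1 - u.2))).
      by rewrite pairE /= !inordK; lia.
    move=> c cC; have := ca c cC; have := cneq c cC.
    have c1 := ltn_ord c.1; have c2 := ltn_ord c.2.
    by rewrite !nbE /= !inordK; lia.
  - apply: (W (inord (u.1 - 1), inord (1 - u.2))).
      by rewrite pairE /= !inordK; lia.
    move=> c cC; have := ca c cC; have := cneq c cC.
    have c1 := ltn_ord c.1; have c2 := ltn_ord c.2.
    by rewrite !nbE /= !inordK; lia.
have hB : (u.1.+1 < n) && ((inord u.1.+1, u.2) \in C).
  case hB: (_ && _) => //; exfalso.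
  have ca : forall c : T, c \in C -> ~~ ((c.1 == u.1.+1 :> nat) && ((c.2:nat) == u.2)).
    move=> c cC; apply/negP => H.
    have c1 := ltn_ord c.1.
    have ce : c = (inord u.1.+1, u.2).
      by apply/eqP; rewrite pairE /= inordK; lia.
    by move: hB; rewrite -ce cC andbT; lia.
  case: (ltnP 0 u.1) => hlt.
  - apply: (W (inord (u.1 - 1), inord (1 - u.2))).
      by rewrite pairE /= !inordK; lia.
    move=> c cC; have := ca c cC; have := cneq c cC.
    have c1 := ltn_ord c.1; have c2 := ltn_ord c.2.
    by rewrite !nbE /= !inordK; lia.
  - apply: (W (inord u.1.+1, inord (1 - u.2))).
      by rewrite pairE /= !inordK; lia.
    move=> c cC; have := ca c cC; have := cneq c cC.
    have c1 := ltn_ord c.1; have c2 := ltn_ord c.2.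
    by rewrite !nbE /= !inordK; lia.
by move/andP: hA => [? ?]; move/andP: hB => [? ?]; split.
Qed.

Lemma cardC (C : {set T}) : #|C| =
  \sum_(i < n) ((inord i, (ord0 : 'I_2)) \in C) +
  \sum_(i < n) ((inord i, (inord 1 : 'I_2)) \in C).
Proof.
rewrite -big_split /=.
transitivity (\sum_(i < n) \sum_(j < 2) (((i, j) : T) \in C : nat)).
  rewrite pair_big /= -sum1_card big_mkcond /=.
  by apply: eq_bigr => [[i j]] _ /=; case: (_ \in C).
apply: eq_bigr => i _; rewrite big_ord_recr big_ord_recr big_ord0 /= add0n inord_val.
congr (_ + _); congr (nat_of_bool (_ \in C)); congr (_, _); apply: val_inj => //=.
by rewrite inordK.
Qed.

End Aux.

Lemma row_bound (f : nat -> bool) k : f 0 -> (forall i, i < k -> f i || f i.+1) ->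
  k.+1 + f k <= 2 * \sum_(i < k.+1) f i.
Proof.
move=> f0; elim: k => [|k IH] H.
  by rewrite big_ord_recr big_ord0 /= f0.
have IH' := IH (fun i hi => H i (ltnW hi)); have := H k (ltnSn k).
rewrite big_ord_recr /=; move: IH'; set S := \sum_(i < k.+1) f i; lia.
Qed.

Lemma evens k : 2 * \sum_(i < k) ~~ odd i = k + odd k.
Proof.
elim: k => [|k IH]; first by rewrite big_ord0.
rewrite big_ord_recr /= mulnDr IH; case: (odd k) => /=; lia.
Qed.

Theorem mainTheorem17 (n : nat) (hn : 2 <= n) :
  gamma_SLD_is (cart_adj (@path_adj n) (@path_adj 2))
    (if odd n then n.+1 else n.+2).
Proof.
case: n hn => [|[|m]] // _.
split.
- pose C0 := [set x : 'I_m.+2 * 'I_2 | ~~ odd x.1 || (x.1 == m.+1 :> nat)].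
  exists C0; split.
  + apply/andP; split.
      by apply/set0Pn; exists (ord0, ord0); rewrite inE.
    apply/forallP => u; apply/implyP => uC; apply: sld_ok => //.
    * move: uC; rewrite inE; case: u => [[[|i] hi] r] //=.
    * move: uC; rewrite inE; case: u => [[i hi] r] /=; lia.
    * move: uC; rewrite inE; case: u => [[[|i] hi] r] //= uC.
      rewrite inE /= inordK; last lia.
      by rewrite subSS subn0; move: uC; case: (odd i).
    * move: uC; rewrite inE; case: u => [[i hi] r] /= uC.
      rewrite inE /= inordK; last lia.
      by move: uC; rewrite /=; case: (odd i).
  + have E : forall r : 'I_2, \sum_(i < m.+2) ((inord i, r) \in C0) =
        (\sum_(i < m.+1) ~~ odd i) + 1.
      move=> r; rewrite big_ord_recr /= inE /= inordK // eqxx orbT; congr (_ + _).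
      apply: eq_bigr => i _; rewrite inE /= inordK; last by apply: ltnW; rewrite ltnS.
      by rewrite (ltn_eqF (ltn_ord i)) orbF.
    rewrite cardC !E; have := evens m.+1; rewrite /= negbK.
    by case: (odd m) => /=; lia.
- move=> C hC; rewrite cardC.
  have R : forall r : 'I_2, m.+3 <= 2 * \sum_(i < m.+2) ((inord i, r) \in C).
    move=> r.
    have := @row_bound (fun i => (inord i, r) \in C) m.+1.
    have f0 : (inord 0, r) \in C.
      apply/negPn/negP => H0; have [h _ _ _] := @sld_nec m C _ hC H0.
      by move: h; rewrite /= inordK.
    have fn : (inord m.+1, r) \in C.
      apply/negPn/negP => H0; have [_ h _ _] := @sld_nec m C _ hC H0.
      by move: h; rewrite /= inordK // ltnn.
    rewrite fn => H; apply: leq_trans (H f0 _); first by rewrite addn1.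
    move=> i hi; case Hi: ((inord i, r) \in C) => //=.
    have [_ _ _ h] := @sld_nec m C _ hC (negbT Hi).
    by move: h; rewrite /= inordK // ltnS ltnW.
  have R0 := R ord0; have R1 := R (inord 1).
  rewrite /= negbK; have := odd_double_half m; rewrite -muln2.
  move: R0 R1; set S0 := \sum_(i < m.+2) ((inord i, ord0) \in C); set S1 := \sum_(i < m.+2) ((inord i, inord 1) \in C).
  by case: (odd m) => /=; lia.
Qed.
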